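(* Let $X$ be a complex Banach space with a closed linear subspace $M$, and let $u_1,\dots,u_n\in X$ with $\|u_k\|=1$. Set $V_0:=\{0\}$ and $V_k:=\operatorname{Span}\{u_1,\dots,u_k\}$ for $k=1,\dots,n$. Let $\delta_1,\dots,\delta_n$ be positive numbers with $\operatorname{dist}(u_k,M+V_{k-1})\ge\delta_k$ for $k=1,\dots,n$, and set $\Delta_k:=\frac{\prod_{i=k}^n\delta_i}{\prod_{i=k+1}^n(1+\delta_i)}$ for $k=1,\dots,n$. Then $\delta_k\le1$ and $\dim(M+V_k)/M=k$ for all $k$, and $$\operatorname{dist}\Big(\sum_{k=1}^n a_ku_k,M\Big)\ge\frac{\Delta_1}{n}\sum_{k=1}^n|a_k|\quad\text{for all }a_1,\dots,a_n\in\mathbb{C},\qquad \gamma(V_n,M)\ge\frac{\Delta_1}{n}.$$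
   Context: For linear subspaces $A,B$, $\gamma(A,B):=\inf_{u\in A\setminus B}\frac{\operatorname{dist}(u,B)}{\operatorname{dist}(u,A\cap B)}$ if $A\not\subset B$, and $\gamma(A,B):=1$ if $A\subset B$. *)

(* Defs.v *)
From HB Require Import structures.
From mathcomp Require Import all_boot all_order all_algebra.
From mathcomp Require Import all_classical all_reals all_analysis.
From mathcomp Require Import complex.
Import Order.TTheory GRing.Theory Num.Theory.
Import numFieldNormedType.Exports.
Set Implicit Arguments. Unset Strict Implicit. Unset Printing Implicit Defensive.
Local Open Scope classical_set_scope.
Local Open Scope ring_scope.

Section Defs.
Variable R : realType.
Variable X : normedModType R[i].

(* real part of a (necessarily real, nonnegative) norm value in R[i] *)
Definition rnorm (x : X) : R := complex.Re `|x|.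

Definition dist (x : X) (A : set X) : R := inf [set rnorm (x - a) | a in A].

Definition lin_subspace (A : set X) : Prop :=
  A 0 /\ (forall x y, A x -> A y -> A (x + y)) /\
  (forall (c : R[i]) x, A x -> A (c *: x)).

Definition setsum (A B : set X) : set X :=
  [set x | exists a b, A a /\ B b /\ x = a + b].

Definition Vspan (u : nat -> X) (k : nat) : set X :=
  [set x | exists c : nat -> R[i], x = \sum_(1 <= i < k.+1) c i *: u i].

(* dim (B / A) = k : there are k vectors in B whose cosets mod A form a
   basis of the quotient B / A (used with A a subspace contained in B) *)
Definition quot_dim_is (B A : set X) (k : nat) : Prop :=
  exists w : 'I_k -> X,
    (forall i, B (w i)) /\
    (forall c : 'I_k -> R[i], A (\sum_(i < k) c i *: w i) -> forall i, c i = 0) /\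
    (forall b, B b -> exists c : 'I_k -> R[i], A (b - \sum_(i < k) c i *: w i)).

Definition gap (A B : set X) : R :=
  if `[< A `<=` B >] then 1
  else inf [set dist u B / dist u (A `&` B) | u in A `\` B].

End Defs.

Definition Delta (R : realType) (delta : nat -> R) (n k : nat) : R :=
  (\prod_(k <= i < n.+1) delta i) / (\prod_(k.+1 <= i < n.+1) (1 + delta i)).

Definition cnorm (R : realType) (c : R[i]) : R := complex.Re `|c|.

(* Main.v *)
Require Import Defs.
From HB Require Import structures.
From mathcomp Require Import all_boot all_order all_algebra.
From mathcomp Require Import all_classical all_reals all_analysis.
From mathcomp Require Import complex.
From mathcomp Require Import zify ring lra.
Import Order.TTheory GRing.Theory Num.Theory.
Import numFieldNormedType.Exports.
Local Open Scope classical_set_scope.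
Local Open Scope ring_scope.
Local Open Scope complex_scope.
Local Open Scope ring_scope.

Section G.
Set Implicit Arguments. Unset Strict Implicit.
Variable R : realType.
Variable X : normedModType R[i].

Lemma ge0_ReE (z : R[i]) : 0 <= z -> z = (complex.Re z)%:C.
Proof. case: z => a b; rewrite lecE /= => /andP[/eqP -> _]. by []. Qed.

Lemma Re_ge0 (z : R[i]) : 0 <= z -> 0 <= complex.Re z.
Proof. by case: z => a b; rewrite lecE /= => /andP[_ ]. Qed.

Lemma Re_le (z w : R[i]) : z <= w -> complex.Re z <= complex.Re w.
Proof. by rewrite lecE => /andP[_ ]. Qed.

Lemma ReD (z w : R[i]) : complex.Re (z + w) = complex.Re z + complex.Re w.
Proof. by case: z; case: w. Qed.

Lemma ReM0 (z w : R[i]) : 0 <= z -> 0 <= w -> complex.Re (z * w) = complex.Re z * complex.Re w.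
Proof. move=> /ge0_ReE -> /ge0_ReE ->. by rewrite -rmorphM. Qed.

Lemma rnorm_ge0 (x : X) : 0 <= rnorm x.
Proof. exact: Re_ge0. Qed.

Lemma rnormD (x y : X) : rnorm (x + y) <= rnorm x + rnorm y.
Proof. by rewrite /rnorm -ReD; apply: Re_le; apply: ler_normD. Qed.

Lemma rnormB (x y : X) : rnorm (x - y) <= rnorm x + rnorm y.
Proof. by rewrite /rnorm -ReD; apply: Re_le; apply: ler_normB. Qed.

Lemma rnormZ (c : R[i]) (x : X) : rnorm (c *: x) = cnorm c * rnorm x.
Proof. by rewrite /rnorm normrZ ReM0. Qed.

Lemma cnorm_ge0 (c : R[i]) : 0 <= cnorm c.
Proof. exact: Re_ge0. Qed.

Lemma cnorm_eq0 (c : R[i]) : cnorm c = 0 -> c = 0.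
Proof. rewrite /cnorm => h. apply/normr0_eq0. by rewrite (ge0_ReE (normr_ge0 c)) h. Qed.

Lemma rnorm_eq0 (x : X) : rnorm x = 0 -> x = 0.
Proof. rewrite /rnorm => h. apply/normr0_eq0. by rewrite (ge0_ReE (normr_ge0 x)) h. Qed.

Lemma rnorm0 : rnorm (0 : X) = 0.
Proof. by rewrite /rnorm normr0. Qed.

Lemma cnorm0 : cnorm (0 : R[i]) = 0.
Proof. by rewrite /cnorm normr0. Qed.

Lemma rnorm1 (x : X) : `|x| = 1 -> rnorm x = 1.
Proof. by rewrite /rnorm => ->. Qed.

Lemma rnorm_sum m p (F : nat -> X) :
  rnorm (\sum_(m <= i < p) F i) <= \sum_(m <= i < p) rnorm (F i).
Proof.
elim/big_ind2: _ => //; first by rewrite rnorm0.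
move=> x1 x2 y1 y2 h1 h2; apply: le_trans (rnormD _ _) _; exact: lerD.
Qed.

Lemma dist_le (x : X) (A : set X) a : A a -> dist x A <= rnorm (x - a).
Proof.
move=> Aa; apply: ge_inf; last by exists a.
by exists 0 => _ [b _ <-]; exact: rnorm_ge0.
Qed.

Lemma dist_lb (x : X) (A : set X) r : A !=set0 ->
  (forall a, A a -> r <= rnorm (x - a)) -> r <= dist x A.
Proof.
move=> [a Aa] h; apply: lb_le_inf; first by exists (rnorm (x - a)), a.
by move=> _ [b Ab <-]; exact: h.
Qed.

Lemma dist_ge0 (x : X) (A : set X) : A !=set0 -> 0 <= dist x A.
Proof. by move=> ne; apply: dist_lb => // a _; exact: rnorm_ge0. Qed.

Lemma reidx (F : nat -> X) k :
  \sum_(1 <= j < k.+1) F j = \sum_(i < k) F i.+1.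
Proof. by rewrite big_add1 /= big_mkord. Qed.

Lemma prod_gt0 (F : nat -> R) m p : (forall i, (m <= i < p)%N -> 0 < F i) ->
  0 < \prod_(m <= i < p) F i.
Proof. by move=> h; rewrite big_nat_cond; apply: prodr_gt0 => i /andP[/h]. Qed.

End G.
Unset Implicit Arguments. Set Strict Implicit.

Section Main.
Variable R : realType.
Variable X : completeNormedModType R[i].
Variables (M : set X) (n : nat) (u : nat -> X) (delta : nat -> R).
Hypothesis hM : lin_subspace M.
Hypothesis hu : forall k, (1 <= k <= n)%N -> `|u k| = 1.
Hypothesis hdpos : forall k, (1 <= k <= n)%N -> 0 < delta k.
Hypothesis hd : forall k, (1 <= k <= n)%N ->
     delta k <= dist (u k) (setsum M (Vspan u k.-1)).

Lemma M0 : M 0. Proof. by case: hM. Qed.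
Lemma MZ c x : M x -> M (c *: x). Proof. by case: hM => _ [_ ]; apply. Qed.

Lemma keyL k (c : nat -> R[i]) m : (1 <= k <= n)%N -> M m ->
  cnorm (c k) * delta k <= rnorm (\sum_(1 <= i < k.+1) c i *: u i - m).
Proof.
move=> /andP[k1 kn] Mm.
have [ck0|ck0] := eqVneq (c k) 0.
  by rewrite ck0 cnorm0 mul0r; exact: rnorm_ge0.
set w := (c k)^-1 *: m + \sum_(1 <= i < k) (- ((c k)^-1 * c i)) *: u i.
have Sw : setsum M (Vspan u k.-1) w.
  exists ((c k)^-1 *: m), (\sum_(1 <= i < k) (- ((c k)^-1 * c i)) *: u i).
  split; first exact: MZ.
  split=> //; exists (fun i => - ((c k)^-1 * c i)); by rewrite prednK.
have E : \sum_(1 <= i < k.+1) c i *: u i - m = c k *: (u k - w).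
  rewrite big_nat_recr //= scalerBr /w scalerDr scalerA divff // scale1r scaler_sumr.
  have -> : \sum_(1 <= i < k) c k *: (- ((c k)^-1 * c i) *: u i) = - \sum_(1 <= i < k) c i *: u i.
    rewrite -sumrN; apply: eq_bigr => i _.
    by rewrite scalerA mulrN mulrA divff // mul1r scaleNr.
  by rewrite opprD opprK [RHS]addrA [RHS]addrC addrA.
rewrite E rnormZ; apply: ler_wpM2l; first exact: cnorm_ge0.
have hk : (1 <= k <= n)%N by rewrite k1 kn.
have h1 := hd k hk.
have h2 := dist_le (u k) Sw.
exact: le_trans h1 h2.
Qed.

Lemma indep k (c : nat -> R[i]) : (k <= n)%N ->
  M (\sum_(1 <= i < k.+1) c i *: u i) -> forall j, (1 <= j <= k)%N -> c j = 0.
Proof.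
elim: k c => [|k IH] c kn HM j.
  by case: j => [|j] //=; rewrite andbF.
have h := @keyL k.+1 c _ _ HM; rewrite subrr rnorm0 in h.
have ck : c k.+1 = 0.
  apply: cnorm_eq0; apply/eqP; rewrite eq_le cnorm_ge0 andbT.
  have dp : 0 < delta k.+1 by apply: hdpos; rewrite /= kn.
  by rewrite -(pmulr_lle0 _ dp); apply: h.
move: HM; rewrite big_nat_recr //= ck scale0r addr0 => HM.
move=> /andP[j1]; rewrite leq_eqVlt => /orP[/eqP ->//|jk].
by apply: IH => //; [exact: ltnW | rewrite j1].
Qed.

Lemma setsum0 k : setsum M (Vspan u k) 0.
Proof.
exists 0, 0; split; first exact: M0.
split; last by rewrite addr0.
by exists (fun _ => 0); rewrite big1 // => i _; rewrite scale0r.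
Qed.

Lemma delta_le1 k : (1 <= k <= n)%N -> delta k <= 1.
Proof.
move=> hk; apply: le_trans (hd _ hk) _.
apply: le_trans (dist_le _ (setsum0 k.-1)) _.
by rewrite subr0 rnorm1 // hu.
Qed.

Lemma qdim k : (k <= n)%N -> quot_dim_is (setsum M (Vspan u k)) M k.
Proof.
move=> kn; exists (fun i : 'I_k => u i.+1); split; [|split].
- move=> i; exists 0, (u i.+1); split; first exact: M0.
  split; last by rewrite add0r.
  exists (fun j => if j == i.+1 then 1 else 0).
  rewrite reidx (bigD1 i) //= eqxx scale1r big1 ?addr0 // => j hj.
  rewrite eqSS; case: eqP => [/val_inj E|_]; last by rewrite scale0r.
  by rewrite E eqxx in hj.
- move=> c Hc i.
  pose c' j := if (insub j.-1 : option 'I_k) is Some i then c i else 0.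
  have E : \sum_(1 <= j < k.+1) c' j *: u j = \sum_(i < k) c i *: u i.+1.
    by rewrite reidx; apply: eq_bigr => l _; rewrite /c' /= valK.
  rewrite -E in Hc; have := @indep k c' kn Hc i.+1.
  by rewrite /c' /= valK; apply; rewrite /= ltn_ord.
- move=> b [m [v [Mm [[c Hv] ->]]]].
  exists (fun i : 'I_k => c i.+1).
  by rewrite Hv reidx addrK.
Qed.

Lemma Vspan0 k : Vspan u k 0.
Proof. by exists (fun _ => 0); rewrite big1 // => i _; rewrite scale0r. Qed.

Lemma main3 (a : nat -> R[i]) :
  Delta delta n 1 / n%:R * (\sum_(1 <= k < n.+1) cnorm (a k))
       <= dist (\sum_(1 <= k < n.+1) a k *: u k) M.
Proof.
set x := \sum_(1 <= k < n.+1) a k *: u k.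
apply: dist_lb; first by exists 0; exact: M0.
move=> m Mm; set e := rnorm (x - m).
have e0 : 0 <= e := rnorm_ge0 _.
have key : forall k, (1 <= k <= n)%N ->
    cnorm (a k) * delta k <= e + \sum_(k.+1 <= i < n.+1) cnorm (a i).
  move=> k hk; have /andP[k1 kn] := hk.
  apply: le_trans (keyL k a m hk Mm) _.
  have -> : \sum_(1 <= i < k.+1) a i *: u i - m =
      (x - m) - \sum_(k.+1 <= i < n.+1) a i *: u i.
    by rewrite /x [in RHS](@big_cat_nat _ _ _ k.+1) //= addrAC addrK.
  apply: le_trans (rnormB _ _) _; apply: lerD => //.
  apply: le_trans (rnorm_sum _ _ _) _; apply: ler_sum_nat => i /andP[ki iN].
  rewrite rnormZ rnorm1 ?mulr1 //; apply: hu; apply/andP; split; lia.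
have claim : forall j, (j <= n)%N ->
    (e + \sum_(n.+1 - j <= i < n.+1) cnorm (a i)) * \prod_(n.+1 - j <= i < n.+1) delta i
    <= e * \prod_(n.+1 - j <= i < n.+1) (1 + delta i).
  elim=> [_|j IH jn].
    by rewrite subn0 !big_geq // addr0.
  have -> : (n.+1 - j.+1 = n - j)%N by rewrite subSS.
  have E1 : (n.+1 - j = (n - j).+1)%N by rewrite subSn // ltnW.
  rewrite E1 in IH; have {IH} IH := IH (ltnW jn).
  move: IH; set k := (n - j)%N => IH.
  have hk : (1 <= k <= n)%N by apply/andP; split; lia.
  have kn1 : (k < n.+1)%N by lia.
  rewrite !(big_ltn kn1).
  have hkey := key k hk.
  have d0 : 0 < delta k := hdpos k hk.
  have Pd0 : 0 <= \prod_(k.+1 <= i < n.+1) delta i.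
    by apply/ltW/prod_gt0 => i hi; apply: hdpos; lia.
  move: IH hkey Pd0.
  set A := \sum_(k.+1 <= i < n.+1) cnorm (a i).
  set B := \prod_(k.+1 <= i < n.+1) delta i.
  set C := \prod_(k.+1 <= i < n.+1) (1 + delta i).
  move=> IH hkey B0.
  have h1 : 0 <= (e + A - cnorm (a k) * delta k) * B by rewrite mulr_ge0 // subr_ge0.
  have h2 : 0 <= (e * C - (e + A) * B) * (1 + delta k).
    by rewrite mulr_ge0 // ?subr_ge0 // addr_ge0 // ltW.
  nra.
have := claim n (leqnn n); rewrite subSnn.
case: (posnP n) => [n0|npos].
  by rewrite n0 invr0 mulr0 mul0r => _.
have h1n : (1 < n.+1)%N by lia.
rewrite /Delta !(big_ltn h1n).
move: (cnorm_ge0 (a 1)) => a10.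
have d1 : 0 < delta 1 by apply: hdpos; lia.
have d1le : delta 1 <= 1 by apply: delta_le1; lia.
have Q0 : 0 < \prod_(2 <= i < n.+1) delta i by apply/prod_gt0 => i hi; apply: hdpos; lia.
have P0 : 0 < \prod_(2 <= i < n.+1) (1 + delta i).
  by apply/prod_gt0 => i hi; apply: addr_gt0 => //; apply: hdpos; lia.
have T0 : 0 <= \sum_(2 <= i < n.+1) cnorm (a i) by apply: sumr_ge0 => i _; exact: cnorm_ge0.
move: Q0 P0 T0.
set Q := \prod_(2 <= i < n.+1) delta i.
set P := \prod_(2 <= i < n.+1) (1 + delta i).
set T := \sum_(2 <= i < n.+1) cnorm (a i).
move=> Q0 P0 T0 h.
have n0 : 0 < n%:R :> R by rewrite ltr0n.
have -> : delta 1 * Q / P / n%:R * (cnorm (a 1) + T) =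
    (delta 1 * Q * (cnorm (a 1) + T)) / (P * n%:R).
  by field; rewrite ?gt_eqF.
rewrite ler_pdivrMr ?mulr_gt0 //.
case: (ltngtP n 1) => [|n2|n1]; first by lia.
  have n2' : 2%:R <= n%:R :> R by rewrite ler_nat.
  have g1 : 0 <= e * P * (n%:R - 2%:R) by rewrite mulr_ge0 ?mulr_ge0 ?subr_ge0 // ltW.
  have g2 : 0 <= e * (delta 1 * Q) by rewrite mulr_ge0 // mulr_ge0 // ltW.
  have g3 : 0 <= e * P * (1 - delta 1) by rewrite mulr_ge0 ?mulr_ge0 ?subr_ge0 // ltW.
  nra.
move: h; rewrite /Q /P /T n1 !big_geq // => h.
nra.
Qed.

Lemma Delta_ge0 : 0 <= Delta delta n 1.
Proof.
rewrite /Delta divr_ge0 //; apply: ltW; apply: prod_gt0 => i hi.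
  by apply: hdpos; lia.
by apply: addr_gt0 => //; apply: hdpos; lia.
Qed.

Lemma gapL : Delta delta n 1 / n%:R <= gap (Vspan u n) M.
Proof.
have Dl0 : 0 <= Delta delta n 1 / n%:R by rewrite divr_ge0 ?Delta_ge0.
rewrite /gap; case: ifPn => [_|/asboolPn H].
  case: (posnP n) => [n0|npos].
    by rewrite n0 invr0 mulr0 ler01.
  rewrite ler_pdivrMr ?ltr0n // mul1r.
  apply: (@le_trans _ _ 1); last by rewrite (ler_nat R 1 n).
  have h1n : (1 < n.+1)%N by lia.
  rewrite /Delta (big_ltn h1n) ler_pdivrMr ?mul1r; last first.
    by apply/prod_gt0 => i hi; apply: addr_gt0 => //; apply: hdpos; lia.
  apply: (@le_trans _ _ (\prod_(2 <= i < n.+1) delta i)).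
    apply: ler_piMl; last by apply: delta_le1; lia.
    by apply/ltW/prod_gt0 => i hi; apply: hdpos; lia.
  rewrite big_nat_cond [X in _ <= X]big_nat_cond; apply: ler_prod => i /andP[hi _].
  have di : 0 < delta i by apply: hdpos; lia.
  by rewrite ltW //= lerDr ltW.
have [v [Vv nMv]] : exists v, Vspan u n v /\ ~ M v.
  apply: contrapT => nex; apply: H => v Vv; apply: contrapT => nMv.
  by apply: nex; exists v.
apply: lb_le_inf.
  by exists (dist v M / dist v (Vspan u n `&` M)), v.
move=> _ [w [Vw nMw] <-].
case: (Vw) => c Ew.
have VM0 : forall y, (Vspan u n `&` M) y -> y = 0.
  move=> y [[c' ->] My]; rewrite big_nat_cond big1 // => j /andP[hj _].
  by rewrite (@indep n c' (leqnn n) My j) ?scale0r //; lia.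
have D0 : (Vspan u n `&` M) 0 by split; [exact: Vspan0 | exact: M0].
have Dge : rnorm w <= dist w (Vspan u n `&` M).
  by apply: dist_lb; [exists 0 | move=> y /VM0 ->; rewrite subr0].
have Dle : dist w (Vspan u n `&` M) <= \sum_(1 <= k < n.+1) cnorm (c k).
  apply: le_trans (dist_le _ D0) _; rewrite subr0 Ew.
  apply: le_trans (rnorm_sum _ _ _) _; apply: ler_sum_nat => i hi.
  rewrite rnormZ rnorm1 ?mulr1 //; apply: hu; lia.
have wpos : 0 < rnorm w.
  rewrite lt_neqAle rnorm_ge0 andbT; apply/eqP => /esym /rnorm_eq0 w0.
  by apply: nMw; rewrite w0; exact: M0.
have Dpos := lt_le_trans wpos Dge.
rewrite ler_pdivlMr //.
apply: le_trans (_ : Delta delta n 1 / n%:R * \sum_(1 <= k < n.+1) cnorm (c k) <= _).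
  exact: ler_wpM2l.
by rewrite Ew; exact: main3.
Qed.

End Main.


Theorem lemma2p8 (R : realType) (X : completeNormedModType R[i])
  (M : set X) (n : nat) (u : nat -> X) (delta : nat -> R) :
  closed M -> lin_subspace M ->
  (forall k, (1 <= k <= n)%N -> `|u k| = 1) ->
  (forall k, (1 <= k <= n)%N -> 0 < delta k) ->
  (forall k, (1 <= k <= n)%N ->
     delta k <= dist (u k) (setsum M (Vspan u k.-1))) ->
  (forall k, (1 <= k <= n)%N -> delta k <= 1) /\
  (forall k, (k <= n)%N -> quot_dim_is (setsum M (Vspan u k)) M k) /\
  (forall a : nat -> R[i],
     Delta delta n 1 / n%:R * (\sum_(1 <= k < n.+1) cnorm (a k))
       <= dist (\sum_(1 <= k < n.+1) a k *: u k) M) /\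
  Delta delta n 1 / n%:R <= gap (Vspan u n) M.
Proof.
move=> _ hM hu hdpos hd.
split; first by move=> k hk; exact: (@delta_le1 R X M n u delta hM hu hd k hk).
split; first by move=> k hk; exact: (@qdim R X M n u delta hM hdpos hd k hk).
split; first by move=> a; exact: (@main3 R X M n u delta hM hu hdpos hd a).
exact: (@gapL R X M n u delta hM hu hdpos hd).
Qed.
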